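(* Let $(a_n)_{n\ge1}$ be a sequence in $(0,\infty)$ such that (i) $\liminf_{N\to\infty}(a_1\cdots a_N)^{1/N}\ge 1$, and (ii) $\limsup_{N\to\infty}\frac1N\sum_{n=1}^N a_n^2\le 1$. Then, as $N\to\infty$, \[ \frac1N\sum_{n=1}^N a_n\to 1,\qquad \frac1N\sum_{n=1}^N a_n^2\to1,\qquad \frac1N\sum_{n=1}^N (a_n-1)^2\to 0 . \] *)

(* Defs.v *)
From Stdlib Require Import Reals.
From Coquelicot Require Import Coquelicot.
Open Scope R_scope.

Fixpoint prod1 (a : nat -> R) (N : nat) : R :=
  match N with
  | O => 1
  | S k => prod1 a k * a (S k)
  end.

Fixpoint sum1 (a : nat -> R) (N : nat) : R :=
  match N with
  | O => 0
  | S k => sum1 a k + a (S k)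
  end.

(* (a_1 ... a_N)^(1/N) ; value at N = 0 irrelevant for limits *)
Definition geom_mean (a : nat -> R) (N : nat) : R :=
  Rpower (prod1 a N) (/ INR N).

Definition avg (a : nat -> R) (N : nat) : R := sum1 a N / INR N.

(* Main.v *)
Require Import Defs.
From Stdlib Require Import Reals Lra Lia.
From Coquelicot Require Import Coquelicot.
Open Scope R_scope.

Lemma limsup_ev (u : nat -> R) : Rbar_le (LimSup_seq u) (Finite 1) ->
  forall eps : posreal, exists N, forall n, (N <= n)%nat -> u n < 1 + eps.
Proof.
  unfold LimSup_seq. destruct (ex_LimSup_seq u) as [l Hl]; simpl.
  destruct l as [r| |]; simpl; intros H eps.
  - destruct (Hl eps) as [_ [N HN]]. exists N; intros n Hn; specialize (HN n Hn); lra.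
  - contradiction.
  - apply Hl.
Qed.

Lemma liminf_ev (u : nat -> R) : Rbar_le (Finite 1) (LimInf_seq u) ->
  forall eps : posreal, exists N, forall n, (N <= n)%nat -> 1 - eps < u n.
Proof.
  unfold LimInf_seq. destruct (ex_LimInf_seq u) as [l Hl]; simpl.
  destruct l as [r| |]; simpl; intros H eps.
  - destruct (Hl eps) as [_ [N HN]]. exists N; intros n Hn; specialize (HN n Hn); lra.
  - apply Hl.
  - contradiction.
Qed.

Lemma sum1_sq (a : nat -> R) n :
  sum1 (fun k => (a k - 1) ^ 2) n = sum1 (fun k => a k ^ 2) n - 2 * sum1 a n + INR n.
Proof.
  induction n. simpl; ring.
  replace (sum1 (fun k => (a k - 1) ^ 2) (S n)) with (sum1 (fun k => (a k - 1) ^ 2) n + (a (S n) - 1) ^ 2) by reflexivity.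
  rewrite IHn, S_INR. simpl. ring.
Qed.

Lemma sum1_nonneg (f : nat -> R) n : (forall k, 0 <= f k) -> 0 <= sum1 f n.
Proof. intros H; induction n; simpl; [lra|]. specialize (H (S n)); lra. Qed.

Lemma sum1_pos (a : nat -> R) n : (forall k, (1 <= k)%nat -> 0 < a k) -> (1 <= n)%nat -> 0 < sum1 a n.
Proof.
  intros H Hn; induction n; [lia|]. simpl.
  destruct n. simpl. assert (0 < a 1%nat) by (apply H; lia). lra.
  assert (0 < a (S (S n))) by (apply H; lia).
  assert (0 < sum1 a (S n)) by (apply IHn; lia). lra.
Qed.

Lemma prod1_pos (a : nat -> R) n : (forall k, (1 <= k)%nat -> 0 < a k) -> 0 < prod1 a n.
Proof.
  intros H; induction n; simpl; [lra|]. apply Rmult_lt_0_compat; auto. apply H; lia.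
Qed.

Lemma ln_bound x c : 0 < x -> 0 < c -> ln x <= x / c - 1 + ln c.
Proof.
  intros Hx Hc.
  assert (H := exp_ineq1_le (ln x - ln c)).
  assert (exp (ln x - ln c) = x / c).
  { unfold Rminus. rewrite exp_plus, exp_Ropp, !exp_ln by lra. reflexivity. }
  assert (ln (x / c) = ln x - ln c) by (apply ln_div; lra).
  assert (ln (x/c) <= x/c - 1).
  { pose proof (exp_ineq1_le (ln (x/c))) as H3. rewrite exp_ln in H3. lra.
    apply Rdiv_lt_0_compat; lra. }
  lra.
Qed.

Lemma ln_prod (a : nat -> R) c n : (forall k, (1 <= k)%nat -> 0 < a k) -> 0 < c ->
  ln (prod1 a n) <= sum1 a n / c - INR n + INR n * ln c.
Proof.
  intros H Hc; induction n; simpl prod1; simpl sum1.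
  - rewrite ln_1. simpl. unfold Rdiv. lra.
  - rewrite ln_mult. 2: apply prod1_pos; auto. 2: apply H; lia.
    pose proof (ln_bound (a (S n)) c (H (S n) ltac:(lia)) Hc).
    rewrite S_INR. unfold Rdiv in *. lra.
Qed.

Lemma amgm (a : nat -> R) n : (forall k, (1 <= k)%nat -> 0 < a k) -> (1 <= n)%nat ->
  geom_mean a n <= avg a n.
Proof.
  intros H Hn. unfold geom_mean, avg, Rpower.
  assert (HN : 0 < INR n) by (apply lt_0_INR; lia).
  assert (HS := sum1_pos a n H Hn).
  set (A := sum1 a n / INR n).
  assert (HA : 0 < A) by (apply Rdiv_lt_0_compat; auto).
  pose proof (ln_prod a A n H HA).
  assert (sum1 a n / A = INR n) by (unfold A; field; lra).
  rewrite H1 in H0.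
  rewrite <- (exp_ln A) by auto.
  assert (Hle : / INR n * ln (prod1 a n) <= ln A).
  { apply Rmult_le_reg_l with (INR n); auto.
    rewrite <- Rmult_assoc, Rinv_r, Rmult_1_l by lra. lra. }
  destruct Hle as [Hl|Hl]; [left; apply exp_increasing; auto | rewrite Hl; right; reflexivity].
Qed.

Theorem lemma2p1 (a : nat -> R)
  (hpos : forall n, (1 <= n)%nat -> 0 < a n)
  (h1 : Rbar_le (Finite 1) (LimInf_seq (geom_mean a)))
  (h2 : Rbar_le (LimSup_seq (avg (fun n => a n ^ 2))) (Finite 1)) :
  is_lim_seq (avg a) 1 /\
  is_lim_seq (avg (fun n => a n ^ 2)) 1 /\
  is_lim_seq (avg (fun n => (a n - 1) ^ 2)) 0.
Proof.
  assert (key : forall eps : posreal, exists N, forall n, (N <= n)%nat ->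
     Rabs (avg a n - 1) < eps /\ Rabs (avg (fun n => a n ^ 2) n - 1) < eps /\
     Rabs (avg (fun n => (a n - 1) ^ 2) n - 0) < eps).
  { intros eps.
    assert (He : 0 < eps / 3) by (destruct eps; simpl; lra).
    destruct (liminf_ev _ h1 (mkposreal _ He)) as [N1 HN1].
    destruct (limsup_ev _ h2 (mkposreal _ He)) as [N2 HN2].
    exists (S (N1 + N2)). intros n Hn.
    specialize (HN1 n ltac:(lia)). specialize (HN2 n ltac:(lia)). simpl in HN1, HN2.
    assert (HG := amgm a n hpos ltac:(lia)).
    assert (HN : 0 < INR n) by (apply lt_0_INR; lia).
    assert (HC : avg (fun n => (a n - 1) ^ 2) n =
               avg (fun n => a n ^ 2) n - 2 * avg a n + 1).
    { unfold avg. rewrite sum1_sq. field. lra. }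
    assert (HC0 : 0 <= avg (fun n => (a n - 1) ^ 2) n).
    { unfold avg. apply Rdiv_le_0_compat; auto. apply sum1_nonneg. intros; apply pow2_ge_0. }
    destruct eps as [e ep]; simpl in *.
    repeat split; apply Rabs_def1; lra. }
  split; [|split]; apply is_lim_seq_spec; intros eps;
    destruct (key eps) as [N HN]; exists N; intros n Hn; apply HN; auto.
Qed.
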